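(* Let $R$ be a ring. Let $P$ be a polygon divided into subpolygons $P^1$ and $P^2$ by the dissection $\{(t,v),(v,t)\}$; let $V^\alpha$ be the vertex set of $P^\alpha$ and $U^\alpha=V^\alpha\setminus\{t,v\}$. Let $D^2$ be a dissection of $P^2$ and $D=\{(t,v),(v,t)\}\,\dot\cup\,D^2$. Let $c:\operatorname{diag}P\to R$ be a map with $c_{rs}\in R^*$ for all $(r,s)\in D$. Then for $i\in U^1$ and $k\in U^2$, \[ \sum_{p\in\mathscr{P}(D,i,k)}c_p=c_{it}c_{vt}^{-1}\sum_{q\in\mathscr{P}(D^2,v,k)}c_q+c_{iv}c_{tv}^{-1}\sum_{q\in\mathscr{P}(D^2,t,k)}c_q, \] and for $i\in U^2$ and $k\in U^1$, \[ \sum_{p\in\mathscr{P}(D,i,k)}c_p=\Big(\sum_{q\in\mathscr{P}(D^2,i,t)}c_q\Big)c_{vt}^{-1}c_{vk}+\Big(\sum_{q\in\mathscr{P}(D^2,i,v)}c_q\Big)c_{tv}^{-1}c_{tk}. \] Here $\mathscr{P}(D^2,\cdot,\cdot)$ refers to $T$-paths in the polygon $P^2$ with respect to $D^2$.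
   Context: $R^*$ denotes the invertible elements of $R$. A polygon is a finite set of at least three vertices with a cyclic ordering, thought of as a convex polygon in the plane; a subpolygon is a subset of at least three vertices with induced cyclic ordering. $\operatorname{diag}P$ is the set of ordered pairs of distinct vertices; internal diagonals are those whose endpoints are not neighbours. $(i,k)$ and $(j,\ell)$ cross if $i,j,k,\ell$ are pairwise distinct with $i<j<k<\ell$ or $i<\ell<k<j$ cyclically. A dissection is a set of internal diagonals closed under reversal with no two crossing; the pair $\{(t,v),(v,t)\}$ divides $P$ into the subpolygons $P^1,P^2$ whose vertex sets are the vertices on either side of $(t,v)$ together with $t,v$. Write $c_{ik}=c(i,k)$. For a polygon $Q$ with dissection $D$, a sequence $(p_1,\ldots,p_\pi)$ of vertices of $Q$ is a $T$-path from $p_1$ to $p_\pi$ with respect to $D$ if: $p_1\ne p_\pi$; the sets $\{p_\alpha,p_{\alpha+1}\}$ ($1\le\alpha<\pi$) are pairwise different 2-element sets; no $(p_\alpha,p_{\alpha+1})$ crosses a diagonal of $D$; each $(p_{2\alpha},p_{2\alpha+1})$ is in $D$ and crosses $(p_1,p_\pi)$, with the crossing points progressing monotonically from $p_1$ to $p_\pi$. $\mathscr{P}(D,i,k)$ is the set of $T$-paths from $i$ to $k$ with respect to $D$, and $c_p=c_{p_1p_2}c_{p_3p_2}^{-1}c_{p_3p_4}\cdots c_{p_{\pi-1}p_{\pi-2}}^{-1}c_{p_{\pi-1}p_\pi}$. *)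

(* Defs.v *)
From HB Require Import structures.
From mathcomp Require Import all_boot all_order all_algebra.
Set Implicit Arguments. Unset Strict Implicit. Unset Printing Implicit Defensive.
Import Order.TTheory GRing.Theory Num.Theory.

(* The polygon P has vertex set 'I_n with the cyclic ordering 0 < 1 < ... < n-1 < 0.
   A subpolygon is a subset Q : {set 'I_n} with the induced cyclic ordering;
   hence crossing of diagonals between vertices of Q is the same in Q and in P. *)

Section Polygon.
Variable n : nat.
Implicit Types (a b x i k : 'I_n) (Q : {set 'I_n}) (D : {set 'I_n * 'I_n}).

Definition in_arc a b x : bool :=
  if (a <= b)%N then (a <= x <= b)%N else ((a <= x)%N || (x <= b)%N).

Definition parc a b : {set 'I_n} := [set x | in_arc a b x].

Definition sbetween a b x : bool := [&& in_arc a b x, x != a & x != b].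

Definition cross (d e : 'I_n * 'I_n) : bool :=
  let: (i, k) := d in let: (j, l) := e in
  uniq [:: i; j; k; l] &&
  ((sbetween i k j && sbetween k i l) || (sbetween i k l && sbetween k i j)).

Definition neighbours Q x y : bool :=
  [&& x \in Q, y \in Q, x != y &
      [forall z in Q, ~~ sbetween x y z] || [forall z in Q, ~~ sbetween y x z]].

Definition internal_diag Q (d : 'I_n * 'I_n) : bool :=
  [&& d.1 \in Q, d.2 \in Q, d.1 != d.2 & ~~ neighbours Q d.1 d.2].

Definition is_dissection Q D : Prop :=
  [/\ forall d, d \in D -> internal_diag Q d,
      forall d, d \in D -> (d.2, d.1) \in D &
      forall d e, d \in D -> e \in D -> ~~ cross d e].

(* the closed side of the diagonal d = (a,b) containing the vertex k contains
   both endpoints of e *)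
Definition kside (d : 'I_n * 'I_n) k (e : 'I_n * 'I_n) : bool :=
  let: (a, b) := d in
  let A := if sbetween a b k then in_arc a b else in_arc b a in
  A e.1 && A e.2.

(* T-path (p_1, ..., p_pi) from i to k in Q w.r.t. D, stored 0-indexed as
   s = [:: s_0; ...; s_(pi-1)]; step j is (s_j, s_(j+1)), j = 0 .. pi-2.
   The paper's even steps alpha correspond to odd j = alpha - 1. *)
Definition is_tpath Q D i k (s : seq 'I_n) : bool :=
  let p j := nth i s j in
  let st j := (p j, p j.+1) in
  let J := iota 0 (size s).-1 in
  [&& (2 <= size s)%N, head i s == i, last i s == k, i != k,
      all (fun x => x \in Q) s,
      all (fun j => p j != p j.+1) J,
      uniq [seq [set p j; p j.+1] | j <- J],
      [forall d in D, all (fun j => ~~ cross (st j) d) J],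
      all (fun j => odd j ==> ((st j \in D) && cross (st j) (i, k))) J &
      all (fun j1 => all (fun j2 =>
             [&& odd j1, odd j2 & (j1 < j2)%N] ==> kside (st j1) k (st j2)) J) J].

Variable R : unitRingType.

Fixpoint cpath (c : 'I_n -> 'I_n -> R) (s : seq 'I_n) : R :=
  match s with
  | a :: b :: [::] => c a b
  | a :: b :: ((d :: _) as rest) => c a b * (c d b)^-1 * cpath c rest
  | _ => 0
  end.

(* Every T-path has
   at most binomial(n,2) <= n*n steps (steps are pairwise different 2-subsets),
   hence length < n*n+2, so this finite sum ranges over all T-paths, each once. *)
Definition tpath_sum Q D i k (c : 'I_n -> 'I_n -> R) : R :=
  \sum_(m < n * n + 2) \sum_(t : m.-tuple 'I_n | is_tpath Q D i k t) cpath c t.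

End Polygon.

Definition Ddiv n (t v : 'I_n) (D2 : {set 'I_n * 'I_n}) : {set 'I_n * 'I_n} :=
  [set (t, v); (v, t)] :|: D2.

(* Main.v *)
Require Import Defs.
From HB Require Import structures.
From mathcomp Require Import all_boot all_order all_algebra.
From mathcomp Require Import zify.
Set Implicit Arguments. Unset Strict Implicit. Unset Printing Implicit Defensive.

Section Geo.
Variable n : nat.
Implicit Types a b c d x y i k u : 'I_n.

Lemma in_arcE a b x : in_arc a b x =
  ((a <= b) && (a <= x <= b)) || ((b < a) && ((a <= x) || (x <= b)))%N.
Proof. rewrite /in_arc; case: leqP => //= _; rewrite ?andbF ?orbF //. Qed.

Lemma crossE (i k j l : 'I_n) : cross (i,k) (j,l) =
  [&& (i:nat) != j, (i:nat) != k, (i:nat) != l, (j:nat) != k, (j:nat) != l, (k:nat) != l &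
   ((sbetween i k j && sbetween k i l) || (sbetween i k l && sbetween k i j))].
Proof. by rewrite /cross /= !inE !negb_or -!andbA. Qed.

Lemma sbetweenE a b x : sbetween a b x = [&& in_arc a b x, (x:nat) != a & (x:nat) != b].
Proof. by []. Qed.

Lemma ksideE a b k e1 e2 : kside (a,b) k (e1,e2) =
  (sbetween a b k && (in_arc a b e1 && in_arc a b e2)) ||
  (~~ sbetween a b k && (in_arc b a e1 && in_arc b a e2)).
Proof. rewrite /kside /=. case: (sbetween a b k) => /=; by rewrite ?orbF. Qed.

Lemma eqoE x y : (x == y) = ((x : nat) == y). Proof. by []. Qed.

Ltac geo := rewrite ?ksideE ?crossE ?sbetweenE ?eqoE /in_arc; repeat (case: ifP => ?); lia.
Ltac geo3 a b c d i k := rewrite ?crossE ?ksideE ?sbetweenE ?eqoE /in_arc;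
  case: (ltngtP a b) => ?; case: (ltngtP c d) => ?; case: (ltngtP i k) => ?; rewrite /=; lia.
Ltac geo4 a b c d i k u w := rewrite ?crossE ?ksideE ?sbetweenE ?eqoE /in_arc;
  case: (ltngtP a b) => ?; case: (ltngtP c d) => ?; case: (ltngtP i k) => ?; 
  case: (ltngtP u w) => ?; rewrite /=; lia.

Lemma arc_both a b z : in_arc a b z -> in_arc b a z -> (z == a) || (z == b).
Proof. geo. Qed.

Lemma arc_l a b : in_arc a b a. Proof. geo. Qed.
Lemma arc_r a b : in_arc a b b. Proof. geo. Qed.

Lemma cross_sym (d e : 'I_n * 'I_n) : cross d e = cross e d.
Proof. case: d e => [i k] [j l]; apply/idP/idP; geo. Qed.

Lemma cross_flip a b (e : 'I_n * 'I_n) : cross (a,b) e = cross (b,a) e.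
Proof. case: e => [j l]; apply/idP/idP; geo. Qed.

Lemma cross_neq a b c d : cross (a,b) (c,d) ->
  [&& a != b, a != c, a != d, b != c, b != d & c != d].
Proof. rewrite crossE ?eqoE; lia. Qed.

Lemma G1 a b x y : in_arc a b x -> in_arc a b y -> ~~ cross (a,b) (x,y).
Proof. geo. Qed.

Lemma G2 a b i u x y : ~~ in_arc a b i -> in_arc a b x -> in_arc a b y ->
  (u == a) || (u == b) -> ~~ cross (i,u) (x,y).
Proof. geo. Qed.

Lemma S1 a b i u x y : ~~ in_arc a b i -> in_arc a b x -> in_arc a b y ->
  (u == a) || (u == b) -> u != x -> u != y -> sbetween x y i = sbetween x y u.
Proof. move=> h1 h2 h3 h4 h5 h6; apply/idP/idP; move: h1 h2 h3 h4 h5 h6; geo. Qed.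

Lemma cross_sb x y p q : p != x -> p != y -> q != x -> q != y -> x != y -> p != q ->
  cross (x,y) (p,q) = (sbetween x y p != sbetween x y q).
Proof. move=> h1 h2 h3 h4 h5 h6; apply/idP/idP; move: h1 h2 h3 h4 h5 h6; geo. Qed.

Lemma arc_ne1 x y e u : in_arc x y e -> ~~ sbetween x y u -> u != x -> u != y -> e != u.
Proof. geo. Qed.
Lemma arc_ne2 x y e u : in_arc y x e -> sbetween x y u -> e != u.
Proof. geo. Qed.

Lemma G4 a b i u x y k : ~~ in_arc a b i -> in_arc a b x -> in_arc a b y -> in_arc a b k ->
  (u == a) || (u == b) -> u != x -> u != y -> cross (x,y) (i,k) -> cross (x,y) (u,k).
Proof.
move=> h1 h2 h3 h4 h5 h6 h7 hc.
have /and5P[h8 h9 h10 h11 /andP[h12 h13]] := cross_neq hc.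
case: (eqVneq u k) => [euk|nuk].
  by have := G2 h1 h2 h3 h5; rewrite cross_sym euk hc.
move: hc; rewrite !cross_sb // ?(S1 h1 h2 h3 h5) //.
all: by rewrite eq_sym.
Qed.

Lemma G4' a b i u x y k : ~~ in_arc a b i -> in_arc a b x -> in_arc a b y -> in_arc a b k ->
  (u == a) || (u == b) -> u != x -> u != y -> cross (x,y) (u,k) -> cross (x,y) (i,k).
Proof.
move=> h1 h2 h3 h4 h5 h6 h7 hc.
have /and5P[h8 h9 h10 h11 /andP[h12 h13]] := cross_neq hc.
have hix : i != x by apply: contraNneq h1 => ->.
have hiy : i != y by apply: contraNneq h1 => ->.
have hik : i != k by apply: contraNneq h1 => ->.
move: hc; rewrite !cross_sb // ?(S1 h1 h2 h3 h5) //.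
all: by rewrite eq_sym.
Qed.

Lemma G5 a b i u x y k e1 e2 : ~~ in_arc a b i -> in_arc a b x -> in_arc a b y -> in_arc a b k ->
  (u == a) || (u == b) -> u != x -> u != y -> cross (x,y) (i,k) ->
  kside (x,y) k (e1,e2) -> (e1 != u) && (e2 != u).
Proof.
move=> h1 h2 h3 h4 h5 h6 h7 hc.
have /and5P[h8 h9 h10 h11 /andP[h12 h13]] := cross_neq hc.
have hix : i != x by apply: contraNneq h1 => ->.
have hiy : i != y by apply: contraNneq h1 => ->.
move: hc; rewrite cross_sb ?(S1 h1 h2 h3 h5) //; try by rewrite eq_sym.
rewrite /kside /=; case: ifP => hk hu /andP[he1 he2].
  have hu' : ~~ sbetween x y u by move: hu; case: (sbetween x y u).
  by rewrite (arc_ne1 he1 hu' h6 h7) (arc_ne1 he2 hu' h6 h7).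
have hu' : sbetween x y u by move: hu; case: (sbetween x y u).
by rewrite (arc_ne2 he1 hu') (arc_ne2 he2 hu').
Qed.

Lemma G6 a b k e1 e2 : in_arc a b k -> k != a -> k != b -> in_arc a b e1 -> in_arc a b e2 ->
  kside (a,b) k (e1,e2) && kside (b,a) k (e1,e2).
Proof. geo. Qed.

Lemma G7 a b i k : ~~ in_arc a b i -> in_arc a b k -> k != a -> k != b -> a != b ->
  cross (a,b) (i,k) && cross (b,a) (i,k).
Proof. geo. Qed.

Lemma kside_rev a b c d i k : kside (a,b) k (c,d) -> cross (a,b) (i,k) -> cross (c,d) (i,k) ->
  kside (c,d) i (a,b).
Proof. geo3 a b c d i k. Qed.

Lemma kside_flip a b k e : k != a -> k != b -> kside (b,a) k e = kside (a,b) k e.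
Proof. case: e => e1 e2; move=> h1 h2; apply/idP/idP; move: h1 h2; geo. Qed.

Lemma kside_flip2 (d : 'I_n * 'I_n) k e1 e2 : kside d k (e2,e1) = kside d k (e1,e2).
Proof. by case: d => a b; rewrite /kside /= andbC. Qed.
End Geo.


Arguments cross {n} d e : simpl never.
Arguments kside {n} d k e : simpl never.
Arguments in_arc {n} a b x : simpl never.
Arguments sbetween {n} a b x : simpl never.

Section TPs.
Variable n : nat.
Implicit Types (i k : 'I_n) (Q : {set 'I_n}) (D : {set 'I_n * 'I_n}) (s : seq 'I_n).

Definition st (x0 : 'I_n) s j := (nth x0 s j, nth x0 s j.+1).
Arguments st : simpl never.

Lemma stS x0 y s j : st x0 (y :: s) j.+1 = st x0 s j.
Proof. by []. Qed.

Lemma set2_l (x y z w : 'I_n) : [set x; y] = [set z; w] -> (x == z) || (x == w).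
Proof. move=> e; have : x \in [set x; y] by rewrite !inE eqxx.
by rewrite e !inE. Qed.

Lemma set2_r (x y z w : 'I_n) : [set x; y] = [set z; w] -> (y == z) || (y == w).
Proof. by rewrite setUC; apply: set2_l. Qed.

Record TP (x0 : 'I_n) Q D i k s : Prop := {
  tp_size : (2 <= size s)%N;
  tp_head : nth x0 s 0 = i;
  tp_last : nth x0 s (size s).-1 = k;
  tp_ik : i != k;
  tp_Q : forall m, (m < size s)%N -> nth x0 s m \in Q;
  tp_neq : forall j, (j < (size s).-1)%N -> nth x0 s j != nth x0 s j.+1;
  tp_uniq : forall j1 j2, (j1 < (size s).-1)%N -> (j2 < (size s).-1)%N ->
     [set nth x0 s j1; nth x0 s j1.+1] = [set nth x0 s j2; nth x0 s j2.+1] -> j1 = j2;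
  tp_nc : forall j d, (j < (size s).-1)%N -> d \in D -> ~~ cross (st x0 s j) d;
  tp_odd : forall j, (j < (size s).-1)%N -> odd j -> (st x0 s j \in D) && cross (st x0 s j) (i, k);
  tp_mono : forall j1 j2, (j2 < (size s).-1)%N -> odd j1 -> odd j2 -> (j1 < j2)%N ->
     kside (st x0 s j1) k (st x0 s j2) }.

Lemma tpathP Q D i k s : is_tpath Q D i k s <-> TP i Q D i k s.
Proof.
rewrite /is_tpath; split.
  move=> /and5P[h1 h2 h3 h4 /and5P[h5 h6 h7 h8 /andP[h9 h10]]].
  split => //.
  - by rewrite nth0; apply/eqP.
  - by rewrite nth_last; apply/eqP.
  - by move=> m hm; apply: (all_nthP i h5).
  - by move=> j hj; apply: (allP h6); rewrite mem_iota.
  - move=> j1 j2 hj1 hj2 e.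
    have := uniqP ([set nth i s 0; nth i s 1]) h7 j1 j2.
    rewrite !inE size_map size_iota !(nth_map 0) ?size_iota // !nth_iota //.
    by move=> /(_ hj1 hj2 e).
  - move=> j d hj hd; move/forall_inP: h8 => /(_ d hd) /allP; apply.
    by rewrite mem_iota.
  - by move=> j hj ho; move/allP: h9 => /(_ j); rewrite mem_iota hj ho; apply.
  - move=> j1 j2 hj2 ho1 ho2 hlt; move/allP: h10 => /(_ j1).
    rewrite mem_iota /= (ltn_trans hlt hj2) => /(_ isT) /allP /(_ j2).
    by rewrite mem_iota hj2 ho1 ho2 hlt; apply.
case=> h1 h2 h3 h4 h5 h6 h7 h8 h9 h10.
apply/and5P; split => //.
- by rewrite -nth0 h2.
- by rewrite -nth_last h3.
apply/and5P; split.
- by apply/(all_nthP i).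
- by apply/allP => j; rewrite mem_iota => /h6.
- apply/(uniqP ([set nth i s 0; nth i s 1])) => j1 j2.
  rewrite !inE size_map size_iota => hj1 hj2.
  rewrite !(nth_map 0) ?size_iota // !nth_iota //.
  exact: h7.
- apply/forall_inP => d hd; apply/allP => j; rewrite mem_iota => /= hj.
  exact: h8.
apply/andP; split.
- apply/allP => j; rewrite mem_iota /= => hj; apply/implyP; exact: h9.
- apply/allP => j1; rewrite mem_iota /= => hj1; apply/allP => j2; rewrite mem_iota /= => hj2.
  apply/implyP => /and3P[o1 o2 hlt]; exact: h10.
Qed.


Lemma TP_def (x y : 'I_n) Q D i k s : TP x Q D i k s -> TP y Q D i k s.
Proof.
case=> h1 h2 h3 h4 h5 h6 h7 h8 h9 h10.
have E m : (m < size s)%N -> nth y s m = nth x s m by move=> hm; apply: set_nth_default.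
have Es j : (j < (size s).-1)%N -> st y s j = st x s j.
  by move=> hj; rewrite /st !E //; lia.
split => //.
- by rewrite E //; lia.
- by rewrite E //; lia.
- by move=> m hm; rewrite E //; apply: h5.
- by move=> j hj; rewrite !E; try lia; apply: h6.
- by move=> j1 j2 hj1 hj2; rewrite !E; try lia; exact: h7.
- by move=> j d hj hd; rewrite Es //; apply: h8.
- by move=> j hj ho; rewrite Es //; apply: h9.
- by move=> j1 j2 hj2 o1 o2 hlt; rewrite !Es //; try lia; exact: h10.
Qed.

Lemma TP_size x0 Q D i k s : TP x0 Q D i k s -> (size s < n * n + 2)%N.
Proof.
case=> h1 _ _ _ _ _ h7 _ _ _.
pose f (j : 'I_(size s).-1) : 'I_n * 'I_n := st x0 s j.
have inj : injective f.
  move=> j1 j2; rewrite /f /st => -[e1 e2]; apply: val_inj; apply: h7; by rewrite /= ?ltn_ord ?e1 ?e2.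
have := leq_card f inj; rewrite card_ord card_prod card_ord; lia.
Qed.

Lemma TP_even x0 Q D i k s : TP x0 Q D i k s -> ~~ odd (size s).-2.
Proof.
case=> h1 _ h3 _ _ _ _ _ h9 _.
apply/negP => ho.
have hj : ((size s).-2 < (size s).-1)%N by lia.
move/andP: (h9 _ hj ho) => [_]; rewrite /st.
have -> : ((size s).-2).+1 = (size s).-1 by lia.
by rewrite h3 => /cross_neq; rewrite eqxx !andbF.
Qed.

Lemma TP_vert x0 Q D i k s (P : pred 'I_n) : TP x0 Q D i k s -> P k ->
  (forall j, (j < (size s).-1)%N -> odd j -> P (st x0 s j).1 && P (st x0 s j).2) ->
  forall m, (0 < m < size s)%N -> P (nth x0 s m).
Proof.
move=> tp Pk Po m hm.
have [->|ne] := eqVneq m (size s).-1; first by rewrite (tp_last tp).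
case ho: (odd m).
  by have /andP[] := Po m ltac:(lia) ho.
have := Po m.-1 ltac:(lia) ltac:(by move: ho hm; case: (m) => //= m' /negbFE).
rewrite /st /=; have -> : m.-1.+1 = m by lia.
by case/andP.
Qed.

Fixpoint allS (N : nat) : seq (seq 'I_n) :=
  if N is N'.+1 then allS N' ++ [seq tval t | t : N'.-tuple 'I_n] else [::].

Lemma mem_allS N s : (s \in allS N) = (size s < N)%N.
Proof.
elim: N => [|N IH] //=; rewrite mem_cat IH.
have -> : (s \in [seq tval t | t : N.-tuple 'I_n]) = (size s == N).
  apply/mapP/eqP => [[t _ ->]|hs]; first by rewrite size_tuple.
  by exists (Tuple (introT eqP hs)); rewrite ?mem_enum.
by rewrite ltnS (leq_eqVlt (size s)) orbC.
Qed.

Lemma uniq_allS N : uniq (allS N).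
Proof.
elim: N => [|N IH] //=; rewrite cat_uniq IH /=; apply/andP; split.
  apply/hasPn => s /mapP[t _ ->]; by rewrite mem_allS size_tuple ltnn.
by rewrite map_inj_uniq ?enum_uniq //; apply: val_inj.
Qed.

Variable R : unitRingType.

Lemma tpath_sumE Q D i k (c : 'I_n -> 'I_n -> R) :
  tpath_sum Q D i k c = (\sum_(s <- allS (n * n + 2) | is_tpath Q D i k s) cpath c s)%R.
Proof.
rewrite /tpath_sum; elim: (n * n + 2) => [|N IH]; first by rewrite big_ord0 big_nil.
rewrite big_ord_recr /= IH big_cat /=; congr (_ + _)%R.
by rewrite big_map big_enum_cond.
Qed.

End TPs.

Lemma sum_bij (T : eqType) (R : zmodType) (L1 L2 : seq T) (P1 P2 : pred T)
  (F1 F2 : T -> R) (phi psi : T -> T) :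
  uniq L1 -> uniq L2 ->
  (forall s, s \in L2 -> P2 s -> [/\ phi s \in L1, P1 (phi s), F1 (phi s) = F2 s & psi (phi s) = s]) ->
  (forall s, s \in L1 -> P1 s -> [/\ psi s \in L2, P2 (psi s) & phi (psi s) = s]) ->
  (\sum_(s <- L1 | P1 s) F1 s = \sum_(s <- L2 | P2 s) F2 s)%R.
Proof.
move=> u1 u2 H2 H1.
rewrite -big_filter -[RHS]big_filter.
have pe : perm_eq [seq s <- L1 | P1 s] [seq phi s | s <- [seq s <- L2 | P2 s]].
  apply: uniq_perm; first exact: filter_uniq.
    rewrite map_inj_in_uniq ?filter_uniq // => x y.
    rewrite !mem_filter => /andP[px lx] /andP[py ly] e.
    by have [_ _ _ <-] := H2 x lx px; have [_ _ _ <-] := H2 y ly py; rewrite e.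
  move=> x; rewrite mem_filter; apply/andP/mapP => [[px lx]|[y]].
    have [a b c] := H1 x lx px; exists (psi x) => //; by rewrite mem_filter b a.
  by rewrite mem_filter => /andP[py ly] ->; have [a b _ _] := H2 y ly py.
rewrite (perm_big _ pe) big_map; apply: eq_big_seq => x.
by rewrite mem_filter => /andP[px lx]; have [_ _ -> _] := H2 x lx px.
Qed.

Import GRing.Theory.

Ltac nlia :=
  repeat match goal with
  | H : ?T |- _ => lazymatch T with
       | is_true (leq _ _) => fail
       | @eq nat _ _ => fail
       | _ => clear H
       end
  end; simpl in *; lia.

Section Core.
Variables (n : nat) (a b t v i k : 'I_n) (D2 : {set 'I_n * 'I_n}).
Hypothesis hab : a != b.
Hypothesis htv_ab : ((t == a) && (v == b)) || ((t == b) && (v == a)).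
Hypothesis hi : ~~ in_arc a b i.
Hypothesis hk : in_arc a b k.
Hypothesis hkt : k != t.
Hypothesis hkv : k != v.
Hypothesis hD2 : forall d, d \in D2 -> in_arc a b d.1 && in_arc a b d.2.
Hypothesis htvD2 : (t, v) \notin D2.
Hypothesis hvtD2 : (v, t) \notin D2.

Local Notation D := (Ddiv t v D2).
Local Notation V2 := (parc a b).

Lemma ht : (t == a) || (t == b).
Proof. by case/orP: htv_ab => /andP[-> _]; rewrite ?orbT. Qed.
Lemma hv : (v == a) || (v == b).
Proof. by case/orP: htv_ab => /andP[_ ->]; rewrite ?orbT. Qed.
Lemma htv : t != v.
Proof. by case/orP: htv_ab => /andP[/eqP-> /eqP->] //; rewrite eq_sym. Qed.
Lemma tA : in_arc a b t.
Proof. by case/orP: ht => /eqP->; [exact: arc_l | exact: arc_r]. Qed.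
Lemma vA : in_arc a b v.
Proof. by case/orP: hv => /eqP->; [exact: arc_l | exact: arc_r]. Qed.
Lemma iA x : in_arc a b x -> i != x.
Proof. by move=> hx; apply: contraNneq hi => ->. Qed.
Lemma kab : (k != a) && (k != b).
Proof. by case/orP: htv_ab => /andP[/eqP e1 /eqP e2]; rewrite -e1 -e2 hkt hkv. Qed.
Lemma inD d : (d \in D) = [|| d == (t,v), d == (v,t) | d \in D2].
Proof. by rewrite /Ddiv !inE ?orbA. Qed.
Lemma Dends d : d \in D -> in_arc a b d.1 && in_arc a b d.2.
Proof. by rewrite inD; case/or3P => [/eqP->|/eqP->|/hD2] //=; rewrite tA vA. Qed.
Lemma tv_cross : cross (t,v) (i,k) && cross (v,t) (i,k).
Proof.
case/andP: kab => h1 h2; have := G7 hi hk h1 h2 hab.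
by case/orP: htv_ab => /andP[/eqP-> /eqP->] //; rewrite andbC.
Qed.
Lemma tv_nc x y : in_arc a b x -> in_arc a b y -> ~~ cross (t,v) (x,y) && ~~ cross (v,t) (x,y).
Proof.
move=> hx hy; have h := G1 hx hy; rewrite cross_flip in h.
have h' := G1 hx hy.
by case/orP: htv_ab => /andP[/eqP-> /eqP->]; rewrite ?h ?h' -?cross_flip ?h ?h'.
Qed.
Lemma tv_kside e1 e2 : in_arc a b e1 -> in_arc a b e2 -> kside (t,v) k (e1,e2).
Proof.
case/andP: kab => h1 h2 he1 he2; have /andP[g1 g2] := G6 hk h1 h2 he1 he2.
by case/orP: htv_ab => /andP[/eqP-> /eqP->].
Qed.
Lemma D2D d : d \in D2 -> d \in D.
Proof. by rewrite inD => ->; rewrite !orbT. Qed.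
Lemma D_D2 d : d \in D -> d.1 != v -> d.2 != v -> d \in D2.
Proof. by case: d => x y; rewrite inD => /or3P[/eqP[_ ->]|/eqP[->]|] //; rewrite eqxx. Qed.

Lemma q_noV q j : TP v V2 D2 v k q -> (j < (size q).-1)%N -> odd j ->
  ((st v q j).1 != v) && ((st v q j).2 != v).
Proof.
move=> tq hj ho; have /andP[_ /cross_neq] := tp_odd tq hj ho.
by case/and5P => _ -> _ -> _.
Qed.

Lemma q_Mv q m : TP v V2 D2 v k q -> (0 < m < size q)%N -> nth v q m != v.
Proof.
move=> tq; apply: (TP_vert (P := fun x => x != v) tq) => //.
by move=> j hj ho; apply: q_noV.
Qed.

Lemma q_V q m : TP v V2 D2 v k q -> (m < size q)%N -> in_arc a b (nth v q m).
Proof. by move=> tq hm; have := tp_Q tq hm; rewrite inE. Qed.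


Ltac ncc := apply/negP => /cross_neq; rewrite ?eqxx /= ?andbF.

Lemma i_nc_t d : d \in D -> ~~ cross (i,t) d.
Proof.
rewrite inD; case/or3P => [/eqP->|/eqP->|hd]; try by ncc.
case: d hd => x y hd; have /andP[hx hy] := hD2 hd; exact: G2 hi hx hy ht.
Qed.

Lemma iAF x : in_arc a b x -> (i == x) = false.
Proof. by move/iA/negbTE. Qed.

Lemma A_bwd r : TP v V2 D2 v k (v :: r) -> nth v r 0 != t ->
  TP v [set: 'I_n] D i k (i :: t :: v :: r).
Proof.
move=> tq hr0; have sq := tp_size tq; rewrite /= in sq.
have Vq := q_V tq; have Mq := q_Mv tq; have Nq := q_noV tq.
have Mq' j : (j < size r)%N -> nth v r j != v.
  by move=> hj; apply: (Mq j.+1); rewrite /=; nlia.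
have Vq' j : (j < size r)%N -> in_arc a b (nth v r j).
  by move=> hj; apply: (Vq j.+1); rewrite /=; nlia.
have Vq0 j : (j <= size r)%N -> in_arc a b (nth v (v :: r) j).
  by move=> hj; apply: (Vq j); rewrite /=; nlia.
constructor.
- by rewrite /=; nlia.
- by [].
- by rewrite nth_last /=; have := tp_last tq; rewrite nth_last.
- by rewrite iA.
- by move=> m _; rewrite in_setT.
- move=> [|[|j]] /= hj; first by rewrite iA ?tA.
    exact: htv.
  by apply: (tp_neq tq); rewrite /=; nlia.
- move=> [|[|j1]] [|[|j2]] /= h1 h2 e //.
  + by move/set2_l: e; rewrite (iAF tA) (iAF vA).
  + by move/set2_l: e; rewrite (iAF (Vq0 j2 _)) ?(iAF (Vq' j2 _)) //; nlia.
  + by move/esym/set2_l: e; rewrite (iAF tA) (iAF vA).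
  + move/set2_r: (e) => /orP[] /eqP ev.
      case: j2 h2 e ev => [|j2] h2 e ev.
        by move/set2_l: e; rewrite (negbTE htv) /= => /eqP et; rewrite -et eqxx in hr0.
      have h : (j2 < size r)%N by nlia.
      by move: ev; rewrite /= => ev; have := Mq' _ h; rewrite -ev eqxx.
    have h : (j2 < size r)%N by nlia.
    by have := Mq' _ h; rewrite -ev eqxx.
  + by move/esym/set2_l: e; rewrite (iAF (Vq0 j1 _)) ?(iAF (Vq' j1 _)) //; nlia.
  + move/esym/set2_r: (e) => /orP[] /eqP ev.
      case: j1 h1 e ev => [|j1] h1 e ev.
        by move/esym/set2_l: e; rewrite (negbTE htv) /= => /eqP et; rewrite -et eqxx in hr0.
      have h : (j1 < size r)%N by nlia.
      by move: ev; rewrite /= => ev; have := Mq' _ h; rewrite -ev eqxx.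
    have h : (j1 < size r)%N by nlia.
    by have := Mq' _ h; rewrite -ev eqxx.
  + by congr (_.+2); apply: (tp_uniq tq) => //=; nlia.
- move=> [|[|j]] d /= hj hd.
  + exact: i_nc_t.
  + move: hd; rewrite inD; case/or3P => [/eqP->|/eqP->|hd]; try by ncc.
    case: d hd => x y hd; have /andP[hx hy] := hD2 hd.
    by case/andP: (tv_nc hx hy).
  + have hx : in_arc a b (nth v (v :: r) j) by apply: Vq0; nlia.
    have hy : in_arc a b (nth v (v :: r) j.+1) by apply: Vq0; nlia.
    rewrite !stS; move: hd; rewrite inD; case/or3P => [/eqP->|/eqP->|hd].
    * by rewrite cross_sym /st; case/andP: (tv_nc hx hy).
    * by rewrite cross_sym /st; case/andP: (tv_nc hx hy).
    * by apply: (tp_nc tq) => //=; nlia.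
- move=> [|[|j]] //= hj ho.
  + by rewrite /st /= inD eqxx /=; case/andP: tv_cross.
  + rewrite !stS; rewrite negbK in ho.
    have hj' : (j < (size (v :: r)).-1)%N by rewrite /=; nlia.
    have /andP[hd hc] := tp_odd tq hj' ho.
    have /andP[n1 n2] := Nq _ hj' ho.
    rewrite D2D //=.
    move: hc n1 n2; rewrite /st => hc n1 n2.
    apply: (G4' hi (Vq0 j _) (Vq0 j.+1 _) hk hv) => //; try nlia; by rewrite eq_sym.
- move=> [|[|j1]] [|[|j2]] //= hj2 o1 o2 hlt.
  + have hx : in_arc a b (nth v (v :: r) j2) by apply: Vq0; nlia.
    have hy : in_arc a b (nth v (v :: r) j2.+1) by apply: Vq0; nlia.
    exact: (tv_kside hx hy).
  + rewrite !stS; rewrite !negbK in o1 o2.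
    by apply: (tp_mono tq) => //=; nlia.
Qed.

Lemma B_bwd r : TP v V2 D2 v k (v :: t :: r) -> TP v [set: 'I_n] D i k (i :: t :: r).
Proof.
move=> tq.
have Vq0 j : (j < (size r).+2)%N -> in_arc a b (nth v (v :: t :: r) j).
  by move=> hj; apply: (q_V tq); nlia.
have Nq := q_noV tq.
constructor.
- by [].
- by [].
- by rewrite nth_last /=; have := tp_last tq; rewrite nth_last.
- by rewrite iA.
- by move=> m _; rewrite in_setT.
- move=> [|j] hj; first by rewrite iA ?tA.
  have := tp_neq tq (j := j.+1) ltac:(nlia); exact.
- move=> [|j1] [|j2] h1 h2 e //.
  + move/set2_l: e; rewrite (iAF (Vq0 j2.+1 _)) ?(iAF (Vq0 j2.+2 _)) //; nlia.
  + move/esym/set2_l: e; rewrite (iAF (Vq0 j1.+1 _)) ?(iAF (Vq0 j1.+2 _)) //; nlia.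
  + congr S; have := tp_uniq tq (j1 := j1.+1) (j2 := j2.+1) ltac:(nlia) ltac:(nlia) e.
    by case.
- move=> [|j] d hj hd; first exact: i_nc_t.
  have hx : in_arc a b (nth v (v :: t :: r) j.+1) by apply: Vq0; nlia.
  have hy : in_arc a b (nth v (v :: t :: r) j.+2) by apply: Vq0; nlia.
  move: hd; rewrite inD; case/or3P => [/eqP->|/eqP->|hd].
  + by rewrite cross_sym /st; case/andP: (tv_nc hx hy).
  + by rewrite cross_sym /st; case/andP: (tv_nc hx hy).
  + have := tp_nc tq (j := j.+1) ltac:(nlia) hd; exact.
- move=> [|j] hj ho //.
  have hj' : (j.+1 < (size (v :: t :: r)).-1)%N by nlia.
  have /andP[hd hc] := tp_odd tq hj' ho.
  have /andP[n1 n2] := Nq _ hj' ho.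
  rewrite !stS in hd hc n1 n2 *.
  rewrite D2D //=.
  have hx : in_arc a b (nth v (v :: t :: r) j.+1) by apply: Vq0; nlia.
  have hy : in_arc a b (nth v (v :: t :: r) j.+2) by apply: Vq0; nlia.
  move: hc n1 n2; rewrite /st => hc n1 n2.
  apply: (G4' hi hx hy hk hv) => //; by rewrite eq_sym.
- move=> [|j1] [|j2] hj2 o1 o2 hlt //.
  have := tp_mono tq (j1 := j1.+1) (j2 := j2.+1) ltac:(nlia) o1 o2 hlt.
  by rewrite !stS.
Qed.

Lemma p_facts p : TP v [set: 'I_n] D i k p ->
  (forall m, (0 < m < size p)%N -> in_arc a b (nth v p m)).
Proof.
move=> tp; apply: (TP_vert (P := fun x => in_arc a b x) tp) => // j hj ho.
have /andP[hd _] := tp_odd tp hj ho; exact: Dends.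
Qed.

Lemma B_fwd w r : TP v [set: 'I_n] D i k (i :: t :: w :: r) -> w != v ->
  TP v V2 D2 v k (v :: t :: w :: r).
Proof.
move=> tp hw.
have Vp := p_facts tp.
have hs := tp_size tp.
have tw : (t, w) \in D2.
  have /andP[hd _] := tp_odd tp (j := 1) ltac:(nlia) isT.
  have hd' : (t, w) \in D by exact: hd.
  by apply: (D_D2 hd'); rewrite /= ?htv ?hw.
have twc : cross (t, w) (i, k) by have /andP[_ hc] := tp_odd tp (j := 1) ltac:(nlia) isT.
have /andP[tA' wA] := hD2 tw.
have Np j : (j < (size (i :: t :: w :: r)).-1)%N -> odd j ->
    ((st v (i :: t :: w :: r) j).1 != v) && ((st v (i :: t :: w :: r) j).2 != v).
  move=> hj ho; case: j hj ho => [|[|j]] hj ho //.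
    by rewrite /st /= htv hw.
  have := tp_mono tp (j1 := 1) (j2 := j.+2) hj isT ho isT.
  case E : (st v (i :: t :: w :: r) j.+2) => [e1 e2] hks.
  apply: (G5 hi tA' wA hk hv _ _ twc hks).
    by rewrite eq_sym htv.
  by rewrite eq_sym.
have Mp m : (0 < m < size (i :: t :: w :: r))%N -> nth v (i :: t :: w :: r) m != v.
  by apply: (TP_vert (P := fun x => x != v) tp) => //; rewrite eq_sym.
constructor.
- by [].
- by [].
- by rewrite nth_last /=; have := tp_last tp; rewrite nth_last.
- by rewrite eq_sym.
- move=> [|m] hm; first by rewrite inE vA.
  by rewrite inE; have := Vp m.+1 ltac:(nlia); exact.
- move=> [|j] hj; first by rewrite eq_sym htv.
  have := tp_neq tp (j := j.+1) ltac:(nlia); exact.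
- move=> [|j1] [|j2] h1 h2 e //.
  + move/set2_l: e => /orP[] /eqP ev.
      by have := Mp j2.+1 ltac:(nlia); rewrite -[nth _ _ _]/(nth v (v :: t :: w :: r) j2.+1) -ev eqxx.
    by have := Mp j2.+2 ltac:(nlia); rewrite -[nth _ _ _]/(nth v (v :: t :: w :: r) j2.+2) -ev eqxx.
  + move/esym/set2_l: e => /orP[] /eqP ev.
      by have := Mp j1.+1 ltac:(nlia); rewrite -[nth _ _ _]/(nth v (v :: t :: w :: r) j1.+1) -ev eqxx.
    by have := Mp j1.+2 ltac:(nlia); rewrite -[nth _ _ _]/(nth v (v :: t :: w :: r) j1.+2) -ev eqxx.
  + congr S; have := tp_uniq tp (j1 := j1.+1) (j2 := j2.+1) ltac:(nlia) ltac:(nlia) e.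
    by case.
- move=> [|j] d hj hd.
    case: d hd => x y hd; have /andP[hx hy] := hD2 hd.
    by rewrite /st /=; case/andP: (tv_nc hx hy).
  have := tp_nc tp (j := j.+1) (d := d) ltac:(nlia) (D2D hd); exact.
- move=> [|j] hj ho //.
  have hj' : (j.+1 < (size (i :: t :: w :: r)).-1)%N by nlia.
  have /andP[hd hc] := tp_odd tp hj' ho.
  have /andP[n1 n2] := Np _ hj' ho.
  have hx : in_arc a b (nth v (i :: t :: w :: r) j.+1) by apply: Vp; nlia.
  have hy : in_arc a b (nth v (i :: t :: w :: r) j.+2) by apply: Vp; nlia.
  rewrite !stS in hd hc n1 n2 *.
  rewrite (D_D2 hd n1 n2) /=.
  move: hc n1 n2 hx hy; rewrite /st /= => hc n1 n2 hx hy.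
  apply: (G4 hi hx hy hk hv) => //; by rewrite eq_sym.
- move=> [|j1] [|j2] hj2 o1 o2 hlt //.
  have := tp_mono tp (j1 := j1.+1) (j2 := j2.+1) ltac:(nlia) o1 o2 hlt.
  by rewrite !stS.
Qed.

Lemma A_fwd r : TP v [set: 'I_n] D i k (i :: t :: v :: r) -> TP v V2 D2 v k (v :: r).
Proof.
move=> tp.
have Vp := p_facts tp.
have hs := tp_size tp.
have rne : r != [::].
  apply/eqP => r0; have := tp_last tp; rewrite r0 /= => e.
  by have := hkv; rewrite -e eqxx.
have Np j : (2 < j < (size (i :: t :: v :: r)).-1)%N -> odd j ->
    ((st v (i :: t :: v :: r) j).1 != v) && ((st v (i :: t :: v :: r) j).2 != v).
  have N3 : (3 < (size (i :: t :: v :: r)).-1)%N ->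
      ((st v (i :: t :: v :: r) 3).1 != v) && ((st v (i :: t :: v :: r) 3).2 != v).
    move=> h3; apply/andP; split.
      rewrite /st /=; have := tp_neq tp (j := 2) ltac:(nlia); by rewrite /= eq_sym.
    apply/negP => /eqP e4; rewrite /st /= in e4.
    have e : [set nth v r 0; nth v r 1] = [set v; nth v r 0].
      by rewrite e4; apply/setP => z; rewrite !inE orbC.
    by have := tp_uniq tp (j1 := 2) (j2 := 3) ltac:(nlia) ltac:(nlia) (esym e).
  move=> /andP[h2 hj] ho.
  have [->|ne3] := eqVneq j 3; first by apply: N3; nlia.
  have h3 : (3 < (size (i :: t :: v :: r)).-1)%N by nlia.
  have /andP[n1 n2] := N3 h3.
  have /andP[hd hc] := tp_odd tp h3 isT.
  have hd2 := D_D2 hd n1 n2.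
  have := tp_mono tp (j1 := 3) (j2 := j) hj isT ho ltac:(case: j h2 hj ho ne3 => //; nlia).
  case E3 : (st v (i :: t :: v :: r) 3) hd2 hc n1 n2 => [x y] hd2 hc n1 n2.
  have /andP[hx hy] := hD2 hd2.
  case E : (st v (i :: t :: v :: r) j) => [e1 e2] hks.
  by apply: (G5 hi hx hy hk hv _ _ hc hks); rewrite eq_sym.
constructor.
- by rewrite /= ltnS lt0n size_eq0.
- by [].
- by rewrite nth_last /=; have := tp_last tp; rewrite nth_last.
- by rewrite eq_sym.
- move=> [|m] hm; first by rewrite inE vA.
  by rewrite inE; have := Vp m.+3 ltac:(nlia); exact.
- move=> j hj; have := tp_neq tp (j := j.+2) ltac:(nlia); exact.
- move=> j1 j2 h1 h2 e.
  have := tp_uniq tp (j1 := j1.+2) (j2 := j2.+2) ltac:(nlia) ltac:(nlia) e.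
  by case.
- move=> j d hj hd.
  have := tp_nc tp (j := j.+2) (d := d) ltac:(nlia) (D2D hd); by rewrite !stS.
- move=> j hj ho.
  have ho2 : odd j.+2 by rewrite /= negbK.
  have hj' : (j.+2 < (size (i :: t :: v :: r)).-1)%N by nlia.
  have /andP[hd hc] := tp_odd tp hj' ho2.
  have hj0 : (0 < j)%N by move: ho; case: (j).
  have /andP[n1 n2] := Np j.+2 ltac:(nlia) ho2.
  have hx : in_arc a b (nth v (i :: t :: v :: r) j.+2) by apply: Vp; nlia.
  have hy : in_arc a b (nth v (i :: t :: v :: r) j.+3) by apply: Vp; nlia.
  rewrite !stS in hd hc n1 n2 *.
  rewrite (D_D2 hd n1 n2) /=.
  move: hc n1 n2 hx hy; rewrite /st /= => hc n1 n2 hx hy.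
  apply: (G4 hi hx hy hk hv) => //; by rewrite eq_sym.
- move=> j1 j2 hj2 o1 o2 hlt.
  have := tp_mono tp (j1 := j1.+2) (j2 := j2.+2) ltac:(nlia) ltac:(by rewrite /= negbK)
     ltac:(by rewrite /= negbK) ltac:(nlia).
  by rewrite !stS.
Qed.

Lemma tv_crossx x : in_arc a b x -> x != t -> x != v -> cross (t,v) (i,x) && cross (v,t) (i,x).
Proof.
move=> hx h1 h2.
have [h1' h2'] : (x != a) /\ (x != b).
  by case/orP: htv_ab => /andP[/eqP e1 /eqP e2]; rewrite -e1 -e2 h1 h2.
have := G7 hi hx h1' h2' hab.
by case/orP: htv_ab => /andP[/eqP-> /eqP->] //; rewrite andbC.
Qed.

Lemma nth1_tv p : TP v [set: 'I_n] D i k p -> (nth v p 1 == t) || (nth v p 1 == v).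
Proof.
move=> tp; have hs := tp_size tp; have hh := tp_head tp.
case: p tp hs hh => [|x0 [|x1 r]] // tp _ /= hh.
have tvD : (t, v) \in D by rewrite inD eqxx.
case: r tp => [|y r] tp.
  have := tp_last tp; rewrite /= => e1.
  have := tp_nc tp (j := 0) isT tvD; rewrite cross_sym /st /= hh e1.
  by case/andP: tv_cross => ->.
have := tp_odd tp (j := 1) isT isT; rewrite /st /= => /andP[/Dends /andP[hx1 _] _].
have [//|n1] := eqVneq x1 t; have [//|n2] := eqVneq x1 v.
have := tp_nc tp (j := 0) isT tvD; rewrite cross_sym /st /= hh.
by case/andP: (tv_crossx hx1 n1 n2) => ->.
Qed.

Variable R : unitRingType.
Variable c : 'I_n -> 'I_n -> R.
Hypothesis hc : c v t \is a GRing.unit.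

Definition phi (q : seq 'I_n) := if nth v q 1 == t then i :: behead q else i :: t :: q.
Definition psi (p : seq 'I_n) := if nth v p 2 == v then behead (behead p) else v :: behead p.

Lemma core_sum :
  (\sum_(s <- allS n (n * n + 2) | is_tpath [set: 'I_n] D i k s && (nth i s 1 == t)) cpath c s
   = \sum_(s <- allS n (n * n + 2) | is_tpath V2 D2 v k s) (c i t * (c v t)^-1 * cpath c s))%R.
Proof.
apply: (sum_bij (phi := phi) (psi := psi)); try exact: uniq_allS.
- move=> s _ /tpathP tq.
  have hs := tp_size tq; have hh := tp_head tq.
  case: s tq hs hh => [|y [|x r]] // tq _ /= hh; subst y.
  have [ext|nxt] := eqVneq x t.
    subst x; case: r tq => [|w r] tq.
      by have := tp_last tq; rewrite /= => e; have := hkt; rewrite -e eqxx.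
    have tp := B_bwd tq.
    have hw : w != v by have := q_Mv tq (m := 2) isT.
    rewrite /phi /psi /= eqxx /= (negbTE hw); split => //.
    + by rewrite mem_allS; apply: (TP_size tp).
    + by rewrite ?eqxx ?andbT; apply/tpathP; apply: TP_def tp.
    + by rewrite -!mulrA mulKr.
  have tp := A_bwd tq nxt.
  rewrite /phi /psi /= (negbTE nxt) /= eqxx; split => //.
  + by rewrite mem_allS; apply: (TP_size tp).
  + by rewrite ?eqxx ?andbT; apply/tpathP; apply: TP_def tp.
  + by rewrite eqxx.
- move=> s _ /andP[/tpathP tp0 /eqP h1].
  have tp := TP_def v tp0.
  have hs := tp_size tp; have hh := tp_head tp.
  case: s tp0 tp hs hh h1 => [|y [|x [|w r]]] // tp0 tp _ /= hh h1; subst y x.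
    by have := tp_last tp; rewrite /= => e; have := hkt; rewrite -e eqxx.
  have [ewv|nwv] := eqVneq w v.
    subst w; have tq := A_fwd tp.
    rewrite /psi /phi /= eqxx /=; split.
    + by rewrite mem_allS; apply: (TP_size tq).
    + by apply/tpathP.
    case: r tp tq {tp0} => [|y r] tp tq.
      by have := tp_last tp; rewrite /= => e; have := hkv; rewrite -e eqxx.
    have hy : y != t.
      apply/eqP => eyt; subst y.
      have e : [set t; v] = [set v; t] by apply/setP => z; rewrite !inE orbC.
      by have := tp_uniq tp (j1 := 1) (j2 := 2) isT isT e.
    by rewrite /= (negbTE hy).
  have tq := B_fwd tp nwv.
  rewrite /psi /phi /= (negbTE nwv) /= eqxx; split => //.
  + by rewrite mem_allS; apply: (TP_size tq).
  + by apply/tpathP.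
Qed.

End Core.

Import GRing.Theory.

Lemma Ddiv_sym n (t v : 'I_n) D2 : Ddiv t v D2 = Ddiv v t D2.
Proof. by rewrite /Ddiv; congr (_ :|: _); apply/setP => z; rewrite !inE orbC. Qed.

Lemma part1 (R : unitRingType) n (a b t v : 'I_n) (D2 : {set 'I_n * 'I_n})
  (c : 'I_n -> 'I_n -> R) i k :
  a != b -> (t == a) && (v == b) || (t == b) && (v == a) ->
  (forall d, d \in D2 -> in_arc a b d.1 && in_arc a b d.2) ->
  c v t \is a GRing.unit -> c t v \is a GRing.unit ->
  ~~ in_arc a b i -> in_arc a b k -> k != t -> k != v ->
  tpath_sum [set: 'I_n] (Ddiv t v D2) i k c =
   (c i t * (c v t)^-1 * tpath_sum (parc a b) D2 v k c
    + c i v * (c t v)^-1 * tpath_sum (parc a b) D2 t k c)%R.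
Proof.
move=> hab h1 hD2 hc1 hc2 hi hk hkt hkv.
have h2 : (v == a) && (t == b) || (v == b) && (t == a)
  by move: h1; case: (t == a); case: (v == b); case: (t == b); case: (v == a).
have ntv : t != v := htv hab h1.
rewrite !tpath_sumE (bigID (fun s => nth i s 1 == t)) /=.
rewrite (core_sum hab h1 hi hk hkt hkv hD2 hc1) -mulr_sumr; congr (_ + _)%R.
rewrite Ddiv_sym mulr_sumr -(core_sum hab h2 hi hk hkv hkt hD2 hc2).
apply: eq_bigl => s.
case Ps: (is_tpath _ _ _ _ s) => //=.
have tp0 := proj1 (tpathP _ _ _ _ _) Ps.
have tp := TP_def t tp0.
have := nth1_tv hab h2 hi hk hkv hkt hD2 tp.
have -> : nth i s 1 = nth t s 1 by apply: set_nth_default; have := tp_size tp; lia.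
case/orP => /eqP ->; rewrite ?eqxx //=.
  by rewrite eq_sym ntv.
by rewrite (negbTE ntv).
Qed.

Section Rev.
Variable n : nat.

Lemma cross_flipP (e d : 'I_n * 'I_n) : cross (e.2, e.1) d = cross e d.
Proof. by case: e => x y; rewrite /= cross_flip. Qed.

Lemma cross_flipR (e d : 'I_n * 'I_n) : cross e (d.2, d.1) = cross e d.
Proof. by rewrite cross_sym cross_flipP cross_sym. Qed.

Lemma kside_flipP (e f : 'I_n * 'I_n) k : k != e.1 -> k != e.2 ->
  kside (e.2, e.1) k (f.2, f.1) = kside e k f.
Proof. by case: e f => x y [f1 f2] /= h1 h2; rewrite kside_flip2 kside_flip. Qed.

Lemma st_rev (x0 : 'I_n) s j : (j < (size s).-1)%N ->
  st x0 (rev s) j = ((st x0 s ((size s).-2 - j)).2, (st x0 s ((size s).-2 - j)).1).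
Proof.
move=> hj; rewrite /st /= !nth_rev; try lia.
by congr pair; congr nth; lia.
Qed.

Lemma TP_rev (x0 : 'I_n) (Q : {set 'I_n}) (D : {set 'I_n * 'I_n}) (i k : 'I_n) (s : seq 'I_n) : (forall d, d \in D -> (d.2, d.1) \in D) ->
  TP x0 Q D i k s -> TP x0 Q D k i (rev s).
Proof.
move=> hD tp; have hs := tp_size tp; have he := TP_even tp.
have oddr j : (j <= (size s).-2)%N -> odd ((size s).-2 - j) = odd j.
  by move=> hj; rewrite oddB // (negbTE he).
constructor.
- by rewrite size_rev.
- rewrite nth_rev; last lia.
  by rewrite subn1; exact: (tp_last tp).
- rewrite size_rev nth_rev; last lia.
  have -> : (size s - ((size s).-1).+1 = 0)%N by lia.
  exact: (tp_head tp).
- by rewrite eq_sym (tp_ik tp).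
- by move=> m hm; rewrite size_rev in hm; rewrite nth_rev //; apply: (tp_Q tp); lia.
- move=> j hj; rewrite size_rev in hj.
  change ((st x0 (rev s) j).1 != (st x0 (rev s) j).2); rewrite st_rev //= eq_sym.
  by apply: (tp_neq tp); lia.
- move=> j1 j2; rewrite size_rev => h1 h2.
  change ([set (st x0 (rev s) j1).1; (st x0 (rev s) j1).2] =
          [set (st x0 (rev s) j2).1; (st x0 (rev s) j2).2] -> j1 = j2).
  rewrite !st_rev //= => e.
  suff : ((size s).-2 - j1 = (size s).-2 - j2)%N by lia.
  apply: (tp_uniq tp); try lia.
  by rewrite setUC e setUC.
- move=> j d; rewrite size_rev => hj hd.
  by rewrite st_rev // cross_flipP; apply: (tp_nc tp) => //; lia.
- move=> j; rewrite size_rev => hj ho.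
  have hj' : ((size s).-2 - j < (size s).-1)%N by lia.
  have ho' : odd ((size s).-2 - j) by rewrite oddr //; lia.
  have /andP[hd hc] := tp_odd tp hj' ho'.
  rewrite st_rev // cross_flipP.
  have -> : (k, i) = ((i, k).2, (i, k).1) by [].
  by rewrite cross_flipR hc andbT (hD _ hd).
- move=> j1 j2; rewrite size_rev => hj2 o1 o2 hlt.
  have h1 : ((size s).-2 - j1 < (size s).-1)%N by lia.
  have h2 : ((size s).-2 - j2 < (size s).-1)%N by lia.
  have o1' : odd ((size s).-2 - j1) by rewrite oddr //; lia.
  have o2' : odd ((size s).-2 - j2) by rewrite oddr //; lia.
  have hm := tp_mono tp (j1 := (size s).-2 - j2) (j2 := (size s).-2 - j1) h1 o2' o1' ltac:(lia).
  have /andP[_ c1] := tp_odd tp h1 o1'.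
  have /andP[_ c2] := tp_odd tp h2 o2'.
  rewrite !st_rev; try lia.
  move: hm c1 c2.
  case: (st x0 s ((size s).-2 - j1)) => x y; case: (st x0 s ((size s).-2 - j2)) => z w.
  move=> hm c1 c2.
  have /and5P[_ n1 _ n2 _] := cross_neq c1.
  rewrite kside_flip2 kside_flip; first exact: (kside_rev hm c2 c1).
  by rewrite eq_sym. by rewrite eq_sym.
Qed.

End Rev.

Lemma cpath3 (R : unitRingType) n (c : 'I_n -> 'I_n -> R) a b d s :
  cpath c [:: a, b, d & s] = (c a b * (c d b)^-1 * cpath c (d :: s))%R.
Proof. by []. Qed.

Lemma cpath_cat2 (R : unitRingType) n (c : 'I_n -> 'I_n -> R) m s x y :
  size s = m.*2.+2 ->
  cpath c (s ++ [:: x; y]) = (cpath c s * (c x (last x s))^-1 * c x y)%R.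
Proof.
elim: m s => [|m IH] s hs.
  by case: s hs => [|a [|b [|? ?]]].
case: s hs => [|a [|b s]] // hs.
case: s hs => [|d s] // hs.
have hs' : size (d :: s) = m.*2.+2 by move: hs; rewrite doubleS /= => -[->].
rewrite !cat_cons cpath3 -cat_cons (IH _ hs') cpath3.
by rewrite !mulrA.
Qed.

Lemma mulcE (R : unitRingType) (x y : R^c) : (x * y)%R = ((y : R) * (x : R))%R :> R.
Proof. by []. Qed.

Lemma cpath_rev (R : unitRingType) n (c : 'I_n -> 'I_n -> R) m s :
  size s = m.*2.+2 ->
  (cpath (R := R^c) (fun x y => c y x) (rev s) : R) = cpath c s.
Proof.
elim: m s => [|m IH] s hs.
  by case: s hs => [|a [|b [|? ?]]].
case: s hs => [|a [|b s]] // hs.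
have hs' : size s = m.*2.+2 by move: hs; rewrite doubleS /= => -[].
rewrite -[a :: b :: s]/([:: a; b] ++ s) rev_cat.
have hr : size (rev s) = m.*2.+2 by rewrite size_rev.
rewrite (cpath_cat2 _ b a hr).
rewrite !mulcE IH //.
case: s hs hs' hr {IH} => [|d s] // _ _ _.
rewrite rev_cons last_rcons /=.
by rewrite !mulrA.
Qed.

Lemma size_even n (x0 : 'I_n) Q D i k s : TP x0 Q D i k s ->
  size s = ((size s).-2)./2.*2.+2.
Proof.
move=> tp; have ho := TP_even tp; have h2 := tp_size tp.
have e := odd_double_half (size s).-2; rewrite (negbTE ho) add0n in e.
by rewrite e; lia.
Qed.

Lemma tpath_rev (R : unitRingType) n (Q : {set 'I_n}) (D : {set 'I_n * 'I_n}) i k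
  (c : 'I_n -> 'I_n -> R) :
  (forall d, d \in D -> (d.2, d.1) \in D) ->
  tpath_sum Q D i k c = (tpath_sum (R := R^c) Q D k i (fun x y => c y x) : R).
Proof.
move=> hD; rewrite !tpath_sumE.
apply: (sum_bij (phi := @rev _) (psi := @rev _)); try exact: uniq_allS.
- move=> s _ /tpathP tp.
  have tr := TP_rev hD tp.
  split.
  + by rewrite mem_allS size_rev; apply: (TP_size tp).
  + by apply/tpathP; apply: TP_def tr.
  + by rewrite -(cpath_rev c (size_even tr)) revK.
  + by rewrite revK.
- move=> s _ /tpathP tp.
  have tr := TP_rev hD tp.
  split.
  + by rewrite mem_allS size_rev; apply: (TP_size tp).
  + by apply/tpathP; apply: TP_def tr.
  + by rewrite revK.
Qed.

Unset Implicit Arguments.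
Import Order.TTheory GRing.Theory Num.Theory.
Local Open Scope ring_scope.

Theorem lemma2p7 (R : unitRingType) (n : nat) (t v : 'I_n)
  (V1 V2 : {set 'I_n}) (D2 : {set 'I_n * 'I_n}) (c : 'I_n -> 'I_n -> R) :
  (3 <= n)%N ->
  internal_diag [set: 'I_n] (t, v) ->
  (V1 = parc t v /\ V2 = parc v t \/ V1 = parc v t /\ V2 = parc t v) ->
  is_dissection V2 D2 ->
  (forall r s, (r, s) \in Ddiv t v D2 -> c r s \is a GRing.unit) ->
  (forall i k, i \in V1 :\: [set t; v] -> k \in V2 :\: [set t; v] ->
     tpath_sum [set: 'I_n] (Ddiv t v D2) i k c =
       c i t * (c v t)^-1 * tpath_sum V2 D2 v k c
     + c i v * (c t v)^-1 * tpath_sum V2 D2 t k c) /\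
  (forall i k, i \in V2 :\: [set t; v] -> k \in V1 :\: [set t; v] ->
     tpath_sum [set: 'I_n] (Ddiv t v D2) i k c =
       tpath_sum V2 D2 i t c * (c v t)^-1 * c v k
     + tpath_sum V2 D2 i v c * (c t v)^-1 * c t k).
Proof.
move=> _ hint hV hdis hunit.
have ntv : t != v by case/and4P: hint.
case: hdis => hdi hsym _.
have [a [b [eV1 eV2 hab htvab]]] : exists a b, [/\ V1 = parc b a, V2 = parc a b, a != b &
    (t == a) && (v == b) || (t == b) && (v == a)].
  case: hV => [[e1 e2]|[e1 e2]].
    by exists v, t; rewrite eq_sym ntv !eqxx orbT.
  by exists t, v; rewrite ntv !eqxx.
have hD2 d : d \in D2 -> in_arc a b d.1 && in_arc a b d.2.
  by move=> hd; case/and4P: (hdi d hd); rewrite eV2 !inE => -> ->.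
have hc1 : c v t \is a GRing.unit by apply: hunit; rewrite /Ddiv !inE eqxx ?orbT.
have hc2 : c t v \is a GRing.unit by apply: hunit; rewrite /Ddiv !inE eqxx ?orbT.
have hDs d : d \in Ddiv t v D2 -> (d.2, d.1) \in Ddiv t v D2.
  case: d => x y; rewrite /Ddiv !inE /= => /orP[/orP[]|] /=.
  - by case/eqP => -> ->; rewrite eqxx /= ?orbT.
  - by case/eqP => -> ->; rewrite eqxx /= ?orbT.
  - by move=> h; rewrite (hsym (x, y) h) !orbT.
have outV x : x \in V1 :\: [set t; v] -> ~~ in_arc a b x.
  rewrite eV1 !inE => /andP[/norP[xt xv] hx]; apply/negP => hx'.
  have := arc_both hx' hx.
  by case/orP: htvab => /andP[/eqP<- /eqP<-]; rewrite (negbTE xt) (negbTE xv).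
have inV x : x \in V2 :\: [set t; v] -> [/\ in_arc a b x, x != t & x != v].
  by rewrite eV2 !inE => /andP[/norP[xt xv] hx].
split.
  move=> i k hi hk; have [hk1 hk2 hk3] := inV k hk.
  by rewrite eV2; apply: part1 => //; apply: outV.
move=> i k hi hk; have [hi1 hi2 hi3] := inV i hi.
rewrite (tpath_rev _ _ _ c hDs).
rewrite (part1 (R := R^c) (c := fun x y => c y x) hab htvab hD2 hc2 hc1 (outV k hk) hi1 hi2 hi3).
rewrite eV2 -!(tpath_rev _ _ _ c hsym).
rewrite !mulcE /= addrC !mulrA.
by [].
Qed.
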